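(* Define $k:[0,1]\times[0,1]\to\mathbb{R}$ by $$k(s,t)=\sum_{j=1}^\infty \frac{(1-s^j)(1-t^j)}{j^2}.$$ Then $k$ is continuous on the whole closed unit square, i.e. $k\in C([0,1]\times[0,1])$. However, the first partial derivative of $k$ with respect to $s$, given for $0\le s<1$ and $0\le t\le 1$ by $\frac{\partial k(s,t)}{\partial s}=\sum_{j=1}^\infty \frac{-s^{j-1}(1-t^j)}{j}$, satisfies $$\lim_{s\to 1}\frac{\partial k(s,t)}{\partial s}=-\infty\quad\text{for every } 0\le t<1,$$ so $\frac{\partial k}{\partial s}$ does not extend to a function in $C([0,1]\times[0,1])$; in particular $k$ is not continuously differentiable on the closed unit square.
   Context: The function $k$ is the kernel of the integral operator $A^*A$ on $L^2(0,1)$, where $A=B^{(H)}\circ J:L^2(0,1)\to\ell^2$, $[Jx](s)=\int_0^s x(t)\,dt$ and $[B^{(H)}z]_j=\int_0^1 t^{j-1}z(t)\,dt$ for $j=1,2,\dots$; this background is not needed for the statement, which concerns only the explicitly defined series $k$. *)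

(* Defs.v *)
From Stdlib Require Import Reals.
From Coquelicot Require Import Coquelicot.
Open Scope R_scope.

Definition k_term (s t : R) (n : nat) : R :=
  (1 - s ^ (S n)) * (1 - t ^ (S n)) / (INR (S n)) ^ 2.

Definition k (s t : R) : R := Series (k_term s t).

Definition dk_term (s t : R) (n : nat) : R :=
  - (s ^ n) * (1 - t ^ (S n)) / INR (S n).

Definition dk (s t : R) : R := Series (dk_term s t).

Definition unit_square (p : R * R) : Prop :=
  0 <= fst p <= 1 /\ 0 <= snd p <= 1.

Definition continuous_on_square (f : R * R -> R) : Prop :=
  forall p, unit_square p ->
    filterlim f (within unit_square (locally p)) (locally (f p)).

(* Main.v *)
Require Import Defs.
From Stdlib Require Import Reals Lra Lia ZArith.
From Coquelicot Require Import Coquelicot.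
Open Scope R_scope.

Lemma is_series_of_Un_cv a l : Un_cv (fun N => sum_f_R0 a N) l -> is_series a l.
Proof.
  intros H. apply is_lim_seq_Reals in H. unfold is_series.
  apply (is_lim_seq_ext _ _ l (fun n => eq_sym (sum_n_Reals a n))) in H. exact H.
Qed.

Definition tel (n : nat) : R := / INR (S n) - / INR (S (S n)).

Lemma tel_sum N : sum_f_R0 tel N = 1 - / INR (S (S N)).
Proof.
  induction N as [|N IH].
  - simpl. unfold tel. simpl. lra.
  - simpl sum_f_R0. rewrite IH. unfold tel. ring.
Qed.

Lemma INR_S_pos n : 0 < INR (S n).
Proof. apply lt_0_INR; lia. Qed.

Lemma tel_cv : is_series tel 1.
Proof.
  apply is_series_of_Un_cv. intros eps Heps.
  destruct (archimed (/ eps)) as [H1 _].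
  assert (Hz : (0 <= Z.to_nat (up (/ eps)))%nat) by lia.
  exists (Z.to_nat (up (/ eps))). intros n Hn.
  rewrite tel_sum. unfold Rdist.
  replace (1 - / INR (S (S n)) - 1) with (- / INR (S (S n))) by ring.
  rewrite Rabs_Ropp, Rabs_pos_eq.
  2: { left; apply Rinv_0_lt_compat, INR_S_pos. }
  assert (Hup : (0 < up (/ eps))%Z).
  { apply lt_IZR. assert (0 < / eps) by (apply Rinv_0_lt_compat; lra). lra. }
  assert (/ eps < INR (S (S n))).
  { apply Rlt_le_trans with (IZR (up (/ eps))); [lra|].
    rewrite <- (Z2Nat.id (up (/eps))) by lia. rewrite <- INR_IZR_INZ.
    apply le_INR. unfold ge in Hn. lia. }
  apply Rinv_lt_contravar in H.
  - rewrite Rinv_inv in H. exact H.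
  - apply Rmult_lt_0_compat; [apply Rinv_0_lt_compat; lra| apply INR_S_pos].
Qed.

Definition bq (n : nat) : R := / (INR (S n)) ^ 2.

Lemma bq_le n : bq n <= 2 * tel n.
Proof.
  unfold bq, tel. rewrite (S_INR (S n)).
  assert (Hx := INR_S_pos n). set (x := INR (S n)) in *.
  assert (Hx1 : 1 <= x) by (unfold x; rewrite S_INR; pose proof (pos_INR n); lra).
  replace (2 * (/ x - / (x + 1))) with (/ x ^ 2 + (x - 1) / (x ^ 2 * (x + 1))) by (field; lra).
  assert (0 <= (x - 1) / (x ^ 2 * (x + 1))).
  { apply Rdiv_le_0_compat; [lra|]. apply Rmult_lt_0_compat; [apply pow_lt|]; lra. }
  lra.
Qed.

Lemma bq_nonneg n : 0 <= bq n.
Proof. unfold bq. left. apply Rinv_0_lt_compat, pow_lt, INR_S_pos. Qed.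

Lemma ex_series_bq : ex_series bq.
Proof.
  apply (ex_series_le bq (fun n => 2 * tel n)).
  - intros n. unfold norm; simpl. unfold abs; simpl. rewrite Rabs_pos_eq by apply bq_nonneg. apply bq_le.
  - apply (ex_series_scal_l 2 tel). exists 1. apply tel_cv.
Qed.

Lemma pow_01 x n : 0 <= x <= 1 -> 0 <= x ^ n <= 1.
Proof.
  intros H. induction n as [|n IH]; simpl; [lra|].
  split. apply Rmult_le_pos; lra.
  rewrite <- (Rmult_1_l 1). apply Rmult_le_compat; lra.
Qed.

Lemma pow_lip x y n : 0 <= x <= 1 -> 0 <= y <= 1 ->
  Rabs (x ^ n - y ^ n) <= INR n * Rabs (x - y).
Proof.
  intros Hx Hy. induction n as [|n IH].
  - simpl. rewrite Rminus_diag, Rabs_R0. lra.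
  - replace (x ^ S n - y ^ S n) with (x * (x ^ n - y ^ n) + y ^ n * (x - y)) by (simpl; ring).
    eapply Rle_trans; [apply Rabs_triang|]. rewrite !Rabs_mult.
    rewrite S_INR. pose proof (pow_01 y n Hy).
    rewrite (Rabs_pos_eq x) by lra. rewrite (Rabs_pos_eq (y ^ n)) by lra.
    pose proof (Rabs_pos (x ^ n - y ^ n)). pose proof (Rabs_pos (x - y)).
    assert (x * Rabs (x ^ n - y ^ n) <= Rabs (x ^ n - y ^ n)).
    { rewrite <- (Rmult_1_l (Rabs (x ^ n - y ^ n))) at 2. apply Rmult_le_compat_r; lra. }
    assert (y ^ n * Rabs (x - y) <= Rabs (x - y)).
    { rewrite <- (Rmult_1_l (Rabs (x - y))) at 2. apply Rmult_le_compat_r; lra. }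
    lra.
Qed.

Lemma k_term_bounds s t n : 0 <= s <= 1 -> 0 <= t <= 1 -> 0 <= k_term s t n <= bq n.
Proof.
  intros Hs Ht. unfold k_term, bq.
  pose proof (pow_01 s (S n) Hs). pose proof (pow_01 t (S n) Ht).
  assert (Hp : 0 < INR (S n) ^ 2) by (apply pow_lt, INR_S_pos).
  unfold Rdiv. split.
  - apply Rmult_le_pos. apply Rmult_le_pos; lra. left; apply Rinv_0_lt_compat; lra.
  - rewrite <- (Rmult_1_l (/ INR (S n) ^ 2)) at 2. apply Rmult_le_compat_r.
    left; apply Rinv_0_lt_compat; lra.
    rewrite <- (Rmult_1_l 1). apply Rmult_le_compat; lra.
Qed.

Lemma k_term_diff s t s0 t0 n : 0 <= s <= 1 -> 0 <= t <= 1 -> 0 <= s0 <= 1 -> 0 <= t0 <= 1 ->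
  Rabs (k_term s t n - k_term s0 t0 n) <= Rabs (s - s0) + Rabs (t - t0).
Proof.
  intros Hs Ht Hs0 Ht0. unfold k_term.
  pose proof (pow_01 s (S n) Hs). pose proof (pow_01 t (S n) Ht).
  pose proof (pow_01 s0 (S n) Hs0). pose proof (pow_01 t0 (S n) Ht0).
  pose proof (pow_lip s s0 (S n) Hs Hs0). pose proof (pow_lip t t0 (S n) Ht Ht0).
  assert (Hx := INR_S_pos n). set (x := INR (S n)) in *.
  assert (Hx1 : 1 <= x) by (unfold x; rewrite S_INR; pose proof (pos_INR n); lra).
  set (a := s ^ S n) in *. set (b := t ^ S n) in *. set (a0 := s0 ^ S n) in *. set (b0 := t0 ^ S n) in *.
  replace ((1 - a) * (1 - b) / x ^ 2 - (1 - a0) * (1 - b0) / x ^ 2)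
    with (((1 - a) * (b0 - b) + (1 - b0) * (a0 - a)) * / x ^ 2) by (field; lra).
  rewrite Rabs_mult, (Rabs_pos_eq (/ x ^ 2)) by (left; apply Rinv_0_lt_compat, pow_lt; lra).
  assert (HN : Rabs ((1 - a) * (b0 - b) + (1 - b0) * (a0 - a)) <= x * (Rabs (s - s0) + Rabs (t - t0))).
  { eapply Rle_trans; [apply Rabs_triang|]. rewrite !Rabs_mult.
    rewrite (Rabs_pos_eq (1 - a)) by lra. rewrite (Rabs_pos_eq (1 - b0)) by lra.
    rewrite (Rabs_minus_sym b0 b), (Rabs_minus_sym a0 a).
    pose proof (Rabs_pos (b - b0)). pose proof (Rabs_pos (a - a0)).
    assert ((1 - a) * Rabs (b - b0) <= Rabs (b - b0)).
    { rewrite <- (Rmult_1_l (Rabs (b - b0))) at 2. apply Rmult_le_compat_r; lra. }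
    assert ((1 - b0) * Rabs (a - a0) <= Rabs (a - a0)).
    { rewrite <- (Rmult_1_l (Rabs (a - a0))) at 2. apply Rmult_le_compat_r; lra. }
    fold x in H3, H4. lra. }
  pose proof (Rabs_pos (s - s0)). pose proof (Rabs_pos (t - t0)).
  apply Rle_trans with (x * (Rabs (s - s0) + Rabs (t - t0)) * / x ^ 2).
  { apply Rmult_le_compat_r; [left; apply Rinv_0_lt_compat, pow_lt; lra| exact HN]. }
  replace (x * (Rabs (s - s0) + Rabs (t - t0)) * / x ^ 2) with ((Rabs (s - s0) + Rabs (t - t0)) * / x) by (field; lra).
  rewrite <- (Rmult_1_r (Rabs (s - s0) + Rabs (t - t0))) at 2.
  apply Rmult_le_compat_l; [lra|]. rewrite <- Rinv_1. apply Rinv_le_contravar; lra.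
Qed.

Lemma series_Un_cv a : ex_series a -> Un_cv (fun N => sum_f_R0 a N) (Series a).
Proof.
  intros H. apply Series_correct in H. apply is_lim_seq_Reals.
  apply (is_lim_seq_ext _ _ _ (sum_n_Reals a)). exact H.
Qed.

Lemma ex_k s t : 0 <= s <= 1 -> 0 <= t <= 1 -> ex_series (k_term s t).
Proof.
  intros Hs Ht. apply (@ex_series_le R_AbsRing R_CompleteNormedModule (k_term s t) bq); [|apply ex_series_bq].
  intros n. change (Rabs (k_term s t n) <= bq n).
  destruct (k_term_bounds s t n Hs Ht). rewrite Rabs_pos_eq; lra.
Qed.

Lemma k_tail s t N : 0 <= s <= 1 -> 0 <= t <= 1 ->
  Rabs (k s t - sum_f_R0 (k_term s t) N) <= Series bq - sum_f_R0 bq N.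
Proof.
  intros Hs Ht.
  apply (sum_maj1 (fun n _ => k_term s t n) bq 0 (k s t) (Series bq) N).
  - apply (series_Un_cv _ (ex_k s t Hs Ht)).
  - apply series_Un_cv, ex_series_bq.
  - intros n. destruct (k_term_bounds s t n Hs Ht). rewrite Rabs_pos_eq; lra.
Qed.

Lemma abs_bounds x : - Rabs x <= x <= Rabs x.
Proof. split; [pose proof (Rle_abs (- x)) as H; rewrite Rabs_Ropp in H; lra | apply Rle_abs]. Qed.

Lemma k_cont : continuous_on_square (fun p => k (fst p) (snd p)).
Proof.
  intros [s0 t0] [Hs0 Ht0]. simpl in *. apply filterlim_locally. intros eps.
  assert (He3 : 0 < eps / 3) by (destruct eps; simpl; lra).
  destruct (series_Un_cv _ ex_series_bq (eps / 3) He3) as [N HN].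
  specialize (HN N (Nat.le_refl N)). unfold Rdist in HN.
  assert (Hd : 0 < eps / (6 * INR (S N))).
  { destruct eps as [e He]. apply Rdiv_lt_0_compat; [lra|]. pose proof (INR_S_pos N); lra. }
  exists (mkposreal _ Hd). intros [s t] [H1 H2] [Hs Ht]. simpl in *.
  change (Rabs (s - s0) < eps / (6 * INR (S N))) in H1.
  change (Rabs (t - t0) < eps / (6 * INR (S N))) in H2.
  change (Rabs (k s t - k s0 t0) < eps).
  pose proof (k_tail s t N Hs Ht) as T1. pose proof (k_tail s0 t0 N Hs0 Ht0) as T2.
  assert (HS : Rabs (sum_f_R0 (k_term s t) N - sum_f_R0 (k_term s0 t0) N) <= eps / 3).
  { rewrite <- minus_sum. eapply Rle_trans; [apply Rsum_abs|].
    eapply Rle_trans.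
    { apply (sum_Rle _ (fun _ => Rabs (s - s0) + Rabs (t - t0))).
      intros n _. apply k_term_diff; auto. }
    rewrite sum_cte. pose proof (INR_S_pos N).
    apply Rle_trans with ((eps / (6 * INR (S N)) + eps / (6 * INR (S N))) * INR (S N)).
    { apply Rmult_le_compat_r; lra. }
    right. field. lra. }
  rewrite Rabs_minus_sym in HN. pose proof (Rle_abs (Series bq - sum_f_R0 bq N)).
  set (A := k s t - sum_f_R0 (k_term s t) N) in *.
  set (B := sum_f_R0 (k_term s t) N - sum_f_R0 (k_term s0 t0) N) in *.
  set (C := k s0 t0 - sum_f_R0 (k_term s0 t0) N) in *.
  replace (k s t - k s0 t0) with (A + B - C) by (unfold A, B, C; ring).
  pose proof (abs_bounds A). pose proof (abs_bounds B). pose proof (abs_bounds C).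
  apply Rabs_def1; lra.
Qed.

Definition ct (t : R) (n : nat) : R := (1 - t ^ (S n)) / INR (S n) ^ 2.
Definition ap (t : R) (n : nat) : R := match n with O => 0 | S m => ct t m end.

Lemma ct_bound t n : 0 <= t <= 1 -> Rabs (ct t n) <= bq n.
Proof.
  intros Ht. replace (ct t n) with (k_term 0 t n).
  - destruct (k_term_bounds 0 t n) as [? ?]; try lra. rewrite Rabs_pos_eq; lra.
  - unfold k_term, ct. rewrite pow_ne_zero by lia. rewrite Rminus_0_r, Rmult_1_l. reflexivity.
Qed.

Lemma ex_shift t x : 0 <= t <= 1 -> 0 <= x <= 1 -> ex_series (fun n => ap t (S n) * x ^ (S n)).
Proof.
  intros Ht Hx. apply (@ex_series_le R_AbsRing R_CompleteNormedModule _ bq); [|apply ex_series_bq].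
  intros n. change (Rabs (ct t n * x ^ S n) <= bq n). rewrite Rabs_mult.
  pose proof (pow_01 x (S n) Hx). rewrite (Rabs_pos_eq (x ^ S n)) by lra.
  pose proof (ct_bound t n Ht). pose proof (Rabs_pos (ct t n)).
  rewrite <- (Rmult_1_r (bq n)). apply Rmult_le_compat; lra.
Qed.

Lemma k_decomp t x : 0 <= t <= 1 -> 0 <= x <= 1 -> k x t = Series (ct t) - PSeries (ap t) x.
Proof.
  intros Ht Hx. unfold k, PSeries.
  assert (E1 : ex_series (ct t)).
  { apply (ex_series_ext (k_term 0 t)); [intros n; unfold k_term, ct; rewrite pow_ne_zero by lia; rewrite Rminus_0_r, Rmult_1_l; reflexivity|]. apply ex_k; lra. }
  rewrite (Series_incr_1 (fun k0 => ap t k0 * x ^ k0)).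
  2: { apply ex_series_incr_1. apply ex_shift; auto. }
  simpl (ap t 0). rewrite Rmult_0_l, Rplus_0_l.
  rewrite <- Series_minus; auto. 2: apply ex_shift; auto.
  apply Series_ext. intros n. unfold k_term, ap, ct. field. apply Rgt_not_eq, INR_S_pos.
Qed.

Lemma ap_radius t : 0 <= t <= 1 -> Rbar_le 1 (CV_radius (ap t)).
Proof.
  intros Ht. destruct (CV_radius_bounded (ap t)) as [Hub _]. apply Hub.
  exists 1. intros n. rewrite pow1, Rmult_1_r. destruct n as [|n]; simpl.
  - rewrite Rabs_R0; lra.
  - eapply Rle_trans; [apply ct_bound; auto|]. unfold bq.
    assert (Hx := INR_S_pos n). set (x := INR (S n)) in *.
    assert (Hx1 : 1 <= x) by (unfold x; rewrite S_INR; pose proof (pos_INR n); lra).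
    rewrite <- Rinv_1. apply Rinv_le_contravar; [lra|]. simpl. nra.
Qed.

Lemma dk_eq s t : dk s t = - PSeries (PS_derive (ap t)) s.
Proof.
  unfold dk, PSeries. rewrite <- Series_opp. apply Series_ext. intros n.
  unfold dk_term, PS_derive, ap, ct. field. apply Rgt_not_eq, INR_S_pos.
Qed.

Lemma deriv_part s t : 0 <= s < 1 -> 0 <= t <= 1 ->
     ex_series (dk_term s t) /\
     filterlim (fun h => (k (s + h) t - k s t) / h)
       (within (fun h => 0 <= s + h <= 1) (locally' 0))
       (locally (dk s t)).
Proof.
  intros Hs Ht.
  assert (Hr : Rbar_lt (Rabs s) (CV_radius (ap t))).
  { eapply Rbar_lt_le_trans; [|apply ap_radius; auto]. simpl. rewrite Rabs_pos_eq; lra. }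
  split.
  - pose proof (ex_pseries_derive _ _ Hr) as E. unfold ex_pseries in E.
    apply (ex_series_ext (fun n => opp (scal (pow_n s n) (PS_derive (ap t) n)))).
    + intros n. rewrite pow_n_pow. change (- (s ^ n * PS_derive (ap t) n) = dk_term s t n).
      unfold dk_term, PS_derive, ap, ct. field. apply Rgt_not_eq, INR_S_pos.
    + exact (ex_series_opp _ E).
  - pose proof (is_derive_PSeries _ _ Hr) as D. apply is_derive_Reals in D.
    apply filterlim_locally. intros eps.
    destruct (D eps (cond_pos eps)) as [delta Hd].
    exists delta. intros h Hh Hh0 HD.
    change (Rabs (h - 0) < delta) in Hh. rewrite Rminus_0_r in Hh.
    change (Rabs ((k (s + h) t - k s t) / h - dk s t) < eps).
    rewrite (k_decomp t (s + h)), (k_decomp t s), dk_eq; auto; try lra.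
    replace ((Series (ct t) - PSeries (ap t) (s + h) - (Series (ct t) - PSeries (ap t) s)) / h -
       - PSeries (PS_derive (ap t)) s)
      with (- ((PSeries (ap t) (s + h) - PSeries (ap t) s) / h - PSeries (PS_derive (ap t)) s))
      by (field; auto).
    rewrite Rabs_Ropp. apply Hd; auto.
Qed.

Lemma partial_le_series u N : (forall n, 0 <= u n) -> ex_series u -> sum_f_R0 u N <= Series u.
Proof.
  intros Hu Hex. apply (growing_ineq (fun N => sum_f_R0 u N)).
  - intros n. simpl. pose proof (Hu (S n)). lra.
  - apply series_Un_cv, Hex.
Qed.

Definition H (N : nat) : R := sum_f_R0 (fun n => / INR (S n)) N.

Lemma ln_step x : 0 < x -> ln (x + 1) - ln x < / x.
Proof.
  intros Hx. rewrite <- ln_div by lra.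
  replace ((x + 1) / x) with (1 + / x) by (field; lra).
  assert (Hy : 0 < / x) by (apply Rinv_0_lt_compat; lra).
  pose proof (exp_ineq1 (/ x) (Rgt_not_eq _ _ Hy)).
  rewrite <- (ln_exp (/ x)) at 2. apply ln_increasing; lra.
Qed.

Lemma H_ln N : ln (INR (S (S N))) <= H N.
Proof.
  induction N as [|N IH].
  - unfold H. simpl. replace (1 + 1) with (1 + 1) by reflexivity.
    pose proof (ln_step 1 ltac:(lra)). rewrite ln_1 in H0. rewrite Rinv_1 in H0. lra.
  - unfold H in *. change (sum_f_R0 (fun n => / INR (S n)) (S N)) with (sum_f_R0 (fun n => / INR (S n)) N + / INR (S (S N))). pose proof (ln_step (INR (S (S N))) (INR_S_pos _)).
    rewrite <- (S_INR (S (S N))) in H0. lra.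
Qed.

Lemma pow_mono_le s n N : 0 <= s <= 1 -> (n <= N)%nat -> s ^ N <= s ^ n.
Proof.
  intros Hs HnN. replace N with (n + (N - n))%nat by lia. rewrite pow_add.
  pose proof (pow_01 s n Hs). pose proof (pow_01 s (N - n) Hs).
  rewrite <- (Rmult_1_r (s ^ n)) at 2. apply Rmult_le_compat_l; lra.
Qed.

Lemma dk_bound s t N : 0 <= s < 1 -> 0 <= t < 1 -> dk s t <= - ((1 - t) * s ^ N * H N).
Proof.
  intros Hs Ht.
  destruct (deriv_part s t Hs ltac:(lra)) as [Ex _].
  set (u := fun n => s ^ n * (1 - t ^ S n) / INR (S n)).
  assert (Eu : forall n, dk_term s t n = - u n).
  { intros n. unfold dk_term, u. field. apply Rgt_not_eq, INR_S_pos. }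
  assert (Hu : forall n, 0 <= u n).
  { intros n. unfold u. pose proof (pow_01 s n ltac:(lra)). pose proof (pow_01 t (S n) ltac:(lra)).
    unfold Rdiv. apply Rmult_le_pos; [apply Rmult_le_pos; lra|].
    left; apply Rinv_0_lt_compat, INR_S_pos. }
  assert (Exu : ex_series u).
  { apply (ex_series_ext (fun n => opp (dk_term s t n))).
    - intros n. rewrite Eu. change (- - u n = u n). ring.
    - exact (ex_series_opp _ Ex). }
  assert (Hdk : dk s t = - Series u).
  { unfold dk. rewrite <- Series_opp. apply Series_ext. exact Eu. }
  rewrite Hdk. apply Ropp_le_contravar.
  eapply Rle_trans; [|apply (partial_le_series u N Hu Exu)].
  unfold H. rewrite scal_sum. apply sum_Rle. intros n HnN.
  unfold u. pose proof (pow_mono_le s n N ltac:(lra) HnN).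
  pose proof (pow_01 s N ltac:(lra)).
  assert (t ^ S n <= t).
  { change (t * t ^ n <= t). pose proof (pow_01 t n ltac:(lra)). nra. }
  assert (Hi : 0 < / INR (S n)) by (apply Rinv_0_lt_compat, INR_S_pos).
  unfold Rdiv. rewrite (Rmult_comm (/ INR (S n))). apply Rmult_le_compat_r; [lra|].
  rewrite Rmult_comm. apply Rmult_le_compat; lra.
Qed.

Lemma dk_limit t : 0 <= t < 1 -> filterlim (fun s => dk s t) (at_left 1) (Rbar_locally m_infty).
Proof.
  intros Ht P [M HM].
  set (L := 2 * (Rabs M + 1) / (1 - t)).
  assert (HL : 0 < L).
  { unfold L. apply Rdiv_lt_0_compat; [pose proof (Rabs_pos M)|]; lra. }
  destruct (archimed (exp L)) as [Hup _].
  pose proof (exp_pos L) as HeL.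
  assert (Hup0 : (0 < up (exp L))%Z) by (apply lt_IZR; lra).
  set (N := Z.to_nat (up (exp L))).
  assert (HN : exp L < INR (S (S N))).
  { apply Rlt_le_trans with (IZR (up (exp L))); [lra|].
    unfold N. rewrite <- (Z2Nat.id (up (exp L))) at 1 by lia. rewrite <- INR_IZR_INZ.
    apply le_INR. lia. }
  assert (HlnN : L < H N).
  { eapply Rlt_le_trans; [|apply H_ln]. rewrite <- (ln_exp L) at 1. apply ln_increasing; lra. }
  assert (HNp : 0 < INR N + 1) by (pose proof (pos_INR N); lra).
  assert (Hd : 0 < / (2 * (INR N + 1))) by (apply Rinv_0_lt_compat; lra).
  exists (mkposreal _ Hd). intros s Hb Hs1. simpl in Hb.
  change (Rabs (s - 1) < / (2 * (INR N + 1))) in Hb.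
  rewrite Rabs_minus_sym, Rabs_pos_eq in Hb by lra.
  assert (Hd2 : / (2 * (INR N + 1)) <= / 2).
  { apply Rinv_le_contravar; [lra|]. pose proof (pos_INR N); lra. }
  assert (Hs : 0 <= s < 1) by lra.
  assert (HsN : / 2 < s ^ N).
  { pose proof (pow_lip s 1 N ltac:(lra) ltac:(lra)) as Hl. rewrite pow1 in Hl.
    rewrite Rabs_minus_sym, (Rabs_pos_eq (1 - s ^ N)) in Hl.
    2: { pose proof (pow_01 s N ltac:(lra)); lra. }
    rewrite Rabs_minus_sym, (Rabs_pos_eq (1 - s)) in Hl by lra.
    assert (INR N * (1 - s) <= INR N * / (2 * (INR N + 1))).
    { apply Rmult_le_compat_l; [apply pos_INR|lra]. }
    assert (INR N * / (2 * (INR N + 1)) < / 2).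
    { replace (INR N * / (2 * (INR N + 1))) with (/ 2 - / (2 * (INR N + 1))) by (field; lra). lra. }
    lra. }
  apply HM.
  eapply Rle_lt_trans; [apply (dk_bound s t N Hs Ht)|].
  assert (Hp : Rabs M + 1 <= (1 - t) * s ^ N * H N).
  { assert (E : Rabs M + 1 = (1 - t) * / 2 * L) by (unfold L; field; lra).
    rewrite E. rewrite Rmult_assoc, Rmult_assoc. apply Rmult_le_compat_l; [lra|].
    apply Rmult_le_compat; lra. }
  pose proof (Rle_abs (- M)) as HM2. rewrite Rabs_Ropp in HM2. lra.
Qed.

Lemma no_ext : ~ (exists g : R * R -> R,
       continuous_on_square g /\
       forall s t, 0 <= s < 1 -> 0 <= t <= 1 -> g (s, t) = dk s t).
Proof.
  intros [g [Hc Hg]].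
  assert (Hsq : unit_square (1, 0)) by (split; simpl; lra).
  specialize (Hc (1, 0) Hsq).
  destruct (proj1 (filterlim_locally _ _) Hc (mkposreal 1 Rlt_0_1)) as [d Hd].
  assert (Hl := dk_limit 0 ltac:(lra) (fun y => y < g (1, 0) - 1)).
  destruct Hl as [d2 Hd2].
  { exists (g (1, 0) - 1). auto. }
  set (e := Rmin (Rmin d d2) 1).
  assert (He : 0 < e) by (unfold e; repeat apply Rmin_glb_lt; try apply cond_pos; lra).
  assert (He1 : e <= d /\ e <= d2 /\ e <= 1).
  { unfold e. repeat split.
    - eapply Rle_trans; apply Rmin_l.
    - eapply Rle_trans; [apply Rmin_l|apply Rmin_r].
    - apply Rmin_r. }
  set (s := 1 - e / 2).
  assert (Hb : Rabs (s - 1) < e).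
  { unfold s. replace (1 - e / 2 - 1) with (- (e / 2)) by ring. rewrite Rabs_Ropp, Rabs_pos_eq; lra. }
  assert (A1 : dk s 0 < g (1, 0) - 1).
  { apply (Hd2 s). change (Rabs (s - 1) < d2). lra. unfold s; lra. }
  assert (A2 : Rabs (g (s, 0) - g (1, 0)) < 1).
  { apply (Hd (s, 0)).
    - split; simpl. change (Rabs (s - 1) < d). lra.
      change (Rabs (0 - 0) < d). rewrite Rminus_0_r, Rabs_R0. apply cond_pos.
    - split; simpl; unfold s; lra. }
  rewrite Hg in A2 by (unfold s; lra).
  pose proof (abs_bounds (dk s 0 - g (1, 0))). lra.
Qed.

Theorem proposition2 :
  (forall s t, 0 <= s <= 1 -> 0 <= t <= 1 -> ex_series (k_term s t)) /\
  continuous_on_square (fun p => k (fst p) (snd p)) /\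
  (forall s t, 0 <= s < 1 -> 0 <= t <= 1 ->
     ex_series (dk_term s t) /\
     filterlim (fun h => (k (s + h) t - k s t) / h)
       (within (fun h => 0 <= s + h <= 1) (locally' 0))
       (locally (dk s t))) /\
  (forall t, 0 <= t < 1 ->
     filterlim (fun s => dk s t) (at_left 1) (Rbar_locally m_infty)) /\
  ~ (exists g : R * R -> R,
       continuous_on_square g /\
       forall s t, 0 <= s < 1 -> 0 <= t <= 1 -> g (s, t) = dk s t).
Proof.
  split; [exact ex_k|]. split; [exact k_cont|]. split; [exact deriv_part|].
  split; [exact dk_limit|]. exact no_ext.
Qed.
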